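(* In the self-confidence game described in the context, every profile $z\in[0,1]^n$ such that (i) $|\mathcal S(z)|=2$, where $\mathcal S(z)=\{i\in\mathcal V: z_i=1\}$, and (ii) $\sigma_j^2\le\sigma_i^2$ for every $j\in\mathcal S(z)$ and every $i\in\mathcal V$, is a Nash equilibrium that is not strict.
   Context: Let $n\ge2$ and $\mathcal V=\{1,\dots,n\}$. Let $P\in\mathbb{R}^{n\times n}$ be a row-stochastic, irreducible, aperiodic matrix (the graph on $\mathcal V$ with edge $(i,j)$ iff $P_{ij}>0$ is strongly connected with gcd of cycle lengths $1$). For $z\in[0,1]^n$, $W(z)=(I-[z])P+[z]$ ($[z]$ the diagonal matrix with diagonal $z$) and $H(z)=\lim_{t\to\infty}W(z)^t$ (the limit exists and is row-stochastic). Let $\sigma_1^2,\dots,\sigma_n^2>0$. Agent $i$'s cost is $\upsilon_i(z)=\sum_jH_{ij}(z)^2\sigma_j^2$; the game has players $\mathcal V$, action sets $[0,1]$, each player minimizing her cost. Nash equilibrium: for all $i$, $\bar z_i\in[0,1]$, $\upsilon_i(z_i,z_{-i})\le\upsilon_i(\bar z_i,z_{-i})$; strict Nash equilibrium: strict inequality whenever $\bar z_i\ne z_i$. *)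

(* Defs.v *)
From HB Require Import structures.
From mathcomp Require Import all_boot all_order all_algebra.
From mathcomp Require Import all_classical all_reals topology normedtype sequences.
Set Implicit Arguments. Unset Strict Implicit. Unset Printing Implicit Defensive.
Import Order.TTheory GRing.Theory Num.Theory.
Import numFieldNormedType.Exports.
Local Open Scope ring_scope.

Section SelfConfidence.
Variables (R : realType) (n : nat).

Definition row_stochastic (P : 'M[R]_n) : Prop :=
  (forall i j, 0 <= P i j) /\ (forall i, \sum_(j < n) P i j = 1).

Definition edge (P : 'M[R]_n) : rel 'I_n := fun i j => 0 < P i j.

Definition irreducible (P : 'M[R]_n) : Prop :=
  forall i j : 'I_n, connect (edge P) i j.

Definition closed_walk_length (P : 'M[R]_n) (k : nat) : Prop :=
  exists (i : 'I_n) (s : seq 'I_n),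
    size s = k /\ path (edge P) i s /\ last i s = i.

Definition aperiodic (P : 'M[R]_n) : Prop :=
  forall d : nat,
    (forall k, (0 < k)%N -> closed_walk_length P k -> (d %| k)%N) -> d = 1%N.

Definition diagz (z : 'I_n -> R) : 'M[R]_n := \matrix_(i, j) (z i *+ (i == j)).

Definition Wmat (P : 'M[R]_n) (z : 'I_n -> R) : 'M[R]_n :=
  (1%:M - diagz z) *m P + diagz z.

Definition mxpow (A : 'M[R]_n) (t : nat) : 'M[R]_n := iter t (mulmx A) 1%:M.

Definition Hmat (P : 'M[R]_n) (z : 'I_n -> R) : 'M[R]_n :=
  \matrix_(i, j) limn (fun t : nat => mxpow (Wmat P z) t i j : R).

Definition cost (P : 'M[R]_n) (s2 : 'I_n -> R) (z : 'I_n -> R) (i : 'I_n) : R :=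
  \sum_(j < n) (Hmat P z i j) ^+ 2 * s2 j.

Definition deviate (z : 'I_n -> R) (i : 'I_n) (a : R) : 'I_n -> R :=
  fun k => if k == i then a else z k.

Definition in01 (a : R) : Prop := 0 <= a /\ a <= 1.

Definition profile (z : 'I_n -> R) : Prop := forall i, in01 (z i).

Definition nash (P : 'M[R]_n) (s2 : 'I_n -> R) (z : 'I_n -> R) : Prop :=
  profile z /\
  forall (i : 'I_n) (a : R), in01 a -> cost P s2 z i <= cost P s2 (deviate z i a) i.

Definition strict_nash (P : 'M[R]_n) (s2 : 'I_n -> R) (z : 'I_n -> R) : Prop :=
  profile z /\
  forall (i : 'I_n) (a : R), in01 a -> a != z i ->
    cost P s2 z i < cost P s2 (deviate z i a) i.

Definition stubborn (z : 'I_n -> R) : {set 'I_n} := [set i | z i == 1].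

End SelfConfidence.

(* Main.v *)
Require Import Defs.
From mathcomp Require Import all_boot all_order all_algebra.
From mathcomp Require Import all_classical all_reals topology normedtype sequences.
From mathcomp Require Import ring lra.
Import Order.TTheory GRing.Theory Num.Theory.
Import numFieldNormedType.Exports.
Local Open Scope classical_set_scope.
Local Open Scope ring_scope.


Section Aux.
Variables (R : realType) (n : nat).
Implicit Types (P M : 'M[R]_n) (z : 'I_n -> R).

Lemma Wentry P z i j : Wmat P z i j = (1 - z i) * P i j + z i * (i == j)%:R.
Proof.
rewrite /Wmat !mxE (bigD1 i) //= big1 => [|k /negbTE ki]; last first.
  by rewrite !mxE eq_sym ki /= subr0 mul0r.
by rewrite !mxE eqxx /= addr0 mulr_natr.
Qed.

Lemma sum_delta (f : 'I_n -> R) i : \sum_k (i == k)%:R * f k = f i.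
Proof.
rewrite (bigD1 i) //= big1 => [|k /negbTE ki]; first by rewrite eqxx mul1r addr0.
by rewrite eq_sym ki mul0r.
Qed.

Lemma WM_entry P z M i j : (Wmat P z *m M) i j = (1 - z i) * (P *m M) i j + z i * M i j.
Proof.
rewrite !mxE.
under eq_bigr do rewrite Wentry mulrDl -!mulrA.
by rewrite big_split /= -!mulr_sumr sum_delta.
Qed.

Lemma mxpowS M t : mxpow M t.+1 = M *m mxpow M t.
Proof. by []. Qed.

Lemma mxpowSr M t : mxpow M t.+1 = mxpow M t *m M.
Proof.
elim: t => [|t IH]; first by rewrite /mxpow /= mulmx1 mul1mx.
by rewrite [LHS]mxpowS IH mulmxA -IH. Qed.

Lemma cvg_sumR (I : finType) (Q : pred I) (f : I -> nat -> R) (l : I -> R) :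
  (forall i, Q i -> f i @ \oo --> l i) ->
  (fun t => \sum_(i | Q i) f i t) @ \oo --> \sum_(i | Q i) l i.
Proof.
move=> H; rewrite unlock /reducebig.
elim: (index_enum I) => [|i r IH] /=; first exact: cvg_cst.
case Qi: (Q i) => //; apply: cvgD => //; exact: H.
Qed.

Lemma Wvec P z (f : 'I_n -> R) k :
  \sum_l Wmat P z k l * f l = (1 - z k) * (\sum_l P k l * f l) + z k * f k.
Proof.
under eq_bigr do rewrite Wentry mulrDl -!mulrA.
by rewrite big_split /= -!mulr_sumr sum_delta.
Qed.

Lemma lim_ge_h (f : nat -> R) l a : f @ \oo --> l -> (forall t, a <= f t) -> a <= l.
Proof.
move=> h H; apply: (cvgr_to_ge h); exact: nearW.
Qed.


Section LemL.
Variables (P : 'M[R]_n) (z : 'I_n -> R).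
Hypotheses (HP : row_stochastic P) (Hirr : irreducible P) (Hz : profile z).
Variable s0 : 'I_n.
Hypothesis Hs0 : z s0 = 1.

Local Notation W := (Wmat P z).
Local Notation Wt t := (mxpow (Wmat P z) t).

Lemma W_ge0 i j : 0 <= W i j.
Proof.
have [z0 z1] := Hz i; rewrite Wentry addr_ge0 // ?mulr_ge0 ?subr_ge0 //.
exact: HP.1.
Qed.

Lemma W_row i : \sum_j W i j = 1.
Proof.
under eq_bigr do rewrite Wentry.
rewrite big_split /= -!mulr_sumr HP.2.
have -> : \sum_j ((i == j)%:R : R) = 1.
  by rewrite -[RHS](sum_delta (fun _ => 1) i); apply: eq_bigr => k _; rewrite mulr1.
by rewrite !mulr1 subrK.
Qed.

Lemma Wt_ge0 t i j : 0 <= Wt t i j.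
Proof.
elim: t i j => [|t IH] i j; first by rewrite /mxpow /= mxE ler0n.
rewrite mxpowS mxE sumr_ge0 // => k _; rewrite mulr_ge0 //; exact: W_ge0.
Qed.

Lemma Wt_row t i : \sum_j Wt t i j = 1.
Proof.
elim: t i => [|t IH] i.
  rewrite /mxpow /=; under eq_bigr do rewrite mxE.
  rewrite (bigD1 i) //= eqxx big1 ?addr0 // => k /negbTE; by rewrite eq_sym => ->.
rewrite mxpowS.
under eq_bigr do rewrite mxE.
rewrite exchange_big /=.
under eq_bigr do rewrite -mulr_sumr IH mulr1.
exact: W_row.
Qed.

Lemma W_stub s j : z s = 1 -> W s j = (s == j)%:R.
Proof. by move=> zs; rewrite Wentry zs subrr mul0r add0r mul1r. Qed.

Lemma Wt_stub t s j : z s = 1 -> Wt t s j = (s == j)%:R.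
Proof.
move=> zs; elim: t j => [|t IH] j; first by rewrite /mxpow /= mxE.
rewrite mxpowS mxE.
under eq_bigr do rewrite W_stub //.
by rewrite sum_delta IH.
Qed.

Lemma Wt_le1 t i j : Wt t i j <= 1.
Proof.
rewrite -(Wt_row t i) (bigD1 j) //= lerDl sumr_ge0 // => k _; exact: Wt_ge0.
Qed.

Lemma Wt_mono t i j : z j = 1 -> Wt t i j <= Wt t.+1 i j.
Proof.
move=> zj; rewrite mxpowSr mxE (bigD1 j) //= W_stub // eqxx mulr1 lerDl.
rewrite sumr_ge0 // => k _; rewrite mulr_ge0 //; [exact: Wt_ge0 | exact: W_ge0].
Qed.

Lemma Wt_cvgS i j : z j = 1 -> cvgn (fun t => Wt t i j).
Proof.
move=> zj; apply: cvgP; apply: nondecreasing_cvgn.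
  by apply/nondecreasing_seqP => t; exact: Wt_mono.
by exists 1 => _ [t _ <-]; exact: Wt_le1.
Qed.


Definition u t i := \sum_(j | z j != 1) Wt t i j.

Lemma u_eq t i : u t i = 1 - \sum_(j | z j == 1) Wt t i j.
Proof.
have h := Wt_row t i; rewrite (bigID (fun j => z j == 1)) /= in h.
by rewrite /u; apply/eqP; rewrite eq_sym subr_eq addrC h.
Qed.

Lemma u_ge0 t i : 0 <= u t i.
Proof. by rewrite sumr_ge0 // => j _; exact: Wt_ge0. Qed.

Lemma u_cvg i : cvgn (fun t => u t i).
Proof.
have -> : (fun t => u t i) = fun t => 1 - \sum_(j | z j == 1) Wt t i j.
  by apply/funext => t; exact: u_eq.
apply: cvgP; apply: cvgB; first exact: cvg_cst.
by apply: cvg_sumR => j /eqP zj; exact: Wt_cvgS.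
Qed.

Definition v i := limn (fun t => u t i).

Lemma u_step t i : u t.+1 i = \sum_k W i k * u t k.
Proof.
rewrite /u mxpowS; under eq_bigr do rewrite mxE.
rewrite exchange_big /=; apply: eq_bigr => k _; by rewrite mulr_sumr.
Qed.

Lemma v_harm i : v i = \sum_k W i k * v k.
Proof.
have h1 : (fun t => u t.+1 i) @ \oo --> v i by have := u_cvg i; rewrite -cvg_shiftS.
have h2 : (fun t => u t.+1 i) @ \oo --> \sum_k W i k * v k.
  under eq_fun do rewrite u_step.
  by apply: cvg_sumR => k _; apply: cvgMl_tmp; exact: u_cvg.
exact: (cvg_unique _ h1 h2).
Qed.

Lemma v_stub s : z s = 1 -> v s = 0.
Proof.
move=> zs; rewrite /v.
have -> : (fun t => u t s) = fun _ => 0.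
  apply/funext => t; rewrite /u big1 // => j zj; rewrite Wt_stub //.
  by case: eqP => // sj; rewrite -sj zs eqxx in zj.
exact: lim_cst.
Qed.

Lemma v_ge0 i : 0 <= v i.
Proof. apply: (cvgr_to_ge (u_cvg i)); apply: nearW => t; exact: u_ge0. Qed.

Lemma v_zero i : v i = 0.
Proof.
have [im Him] : exists im, forall k, v k <= v im.
  by case: (@arg_maxP _ _ _ s0 xpredT v isT) => im _ H; exists im => k; exact: H.
suff Mle0 : v im <= 0 by apply/le_anti; rewrite v_ge0 (le_trans (Him i)).
rewrite leNgt; apply/negP => Mpos.
have step : forall x y, v x = v im -> edge P x y -> v y = v im.
  move=> x y vx exy.
  have zx : z x != 1 by apply/eqP => zx; move: Mpos; rewrite -vx v_stub // ltxx.
  have [zx0 zx1] := Hz x.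
  have zxlt : 0 < 1 - z x by rewrite subr_gt0 lt_neqAle zx zx1.
  have hS : \sum_k P x k * v k = v x.
    have := v_harm x; rewrite Wvec => /eqP.
    rewrite -subr_eq0 => /eqP H.
    have : (1 - z x) * (v x - \sum_k P x k * v k) = 0.
      by rewrite -[RHS]H; ring.
    move/eqP; rewrite mulf_eq0 gt_eqF //= subr_eq0 => /eqP ->. by [].
  have H0 : \sum_k P x k * (v im - v k) = 0.
    under eq_bigr do rewrite mulrBr.
    by rewrite sumrB -mulr_suml HP.2 hS vx mul1r subrr.
  have nn : forall k, true -> 0 <= P x k * (v im - v k).
    by move=> k _; rewrite mulr_ge0 ?subr_ge0 //; exact: HP.1.
  have : P x y * (v im - v y) = 0 := psumr_eq0P nn H0 isT.
  by move/eqP; rewrite mulf_eq0 (gt_eqF exy) /= subr_eq0 => /eqP ->.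
have := Hirr im s0 => /connectP [p pth Hl].
have key : forall p x, v x = v im -> path (edge P) x p -> v (last x p) = v im.
  elim=> [|y p' IH] x vx //= /andP[exy pth']; apply: IH pth'; exact: step vx exy.
have := key p im erefl pth; rewrite -Hl v_stub // => h.
by move: Mpos; rewrite -h ltxx.
Qed.
Lemma Wt_cvg0 i j : z j != 1 -> (fun t => Wt t i j) @ \oo --> 0.
Proof.
move=> zj; apply: (@squeeze_cvgr _ _ _ _ (fun _ => 0) (fun t => u t i)).
- apply: nearW => t; rewrite Wt_ge0 /= /u (bigD1 j) //= lerDl sumr_ge0 // => k _.
  exact: Wt_ge0.
- exact: cvg_cst.
- by have := u_cvg i; rewrite -/(v i) v_zero.
Qed.

Lemma H_cvg i j : (fun t => Wt t i j) @ \oo --> Hmat P z i j.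
Proof.
rewrite mxE; case: (eqVneq (z j) 1) => zj; first exact: Wt_cvgS.
have -> : limn (fun t => Wt t i j) = 0 by exact: (cvg_lim _ (Wt_cvg0 i j zj)).
exact: Wt_cvg0.
Qed.

Lemma H_zero i j : z j != 1 -> Hmat P z i j = 0.
Proof. move=> zj; exact: (cvg_unique _ (H_cvg i j) (Wt_cvg0 i j zj)). Qed.

Lemma H_ge0 i j : 0 <= Hmat P z i j.
Proof. apply: (cvgr_to_ge (H_cvg i j)); apply: nearW => t; exact: Wt_ge0. Qed.

Lemma H_row i : \sum_j Hmat P z i j = 1.
Proof.
have h := @cvg_sumR _ xpredT (fun j t => Wt t i j) (fun j => Hmat P z i j)
  (fun j _ => H_cvg i j).
have e : (fun t => \sum_(j | xpredT j) Wt t i j) = fun _ => 1.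
  by apply/funext => t; exact: Wt_row.
rewrite e in h; have h2 : (fun _ : nat => (1:R)) @ \oo --> (1:R) by apply: cvg_cst.
exact: (cvg_unique _ h h2).
Qed.

Lemma H_stub s j : z s = 1 -> Hmat P z s j = (s == j)%:R.
Proof.
move=> zs; rewrite mxE.
have -> : (fun t => Wt t s j) = fun _ => (s == j)%:R.
  by apply/funext => t; exact: Wt_stub.
exact: lim_cst.
Qed.

Lemma H_harm i j : (W *m Hmat P z) i j = Hmat P z i j.
Proof.
have h1 : (fun t => Wt t.+1 i j) @ \oo --> Hmat P z i j.
  by have := H_cvg i j; rewrite -cvg_shiftS.
have h2 : (fun t => Wt t.+1 i j) @ \oo --> (W *m Hmat P z) i j.
  rewrite mxE; under eq_fun do rewrite mxpowS mxE.
  by apply: cvg_sumR => k _; apply: cvgMl_tmp; exact: H_cvg.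
exact: (cvg_unique _ h2 h1).
Qed.

End LemL.

Lemma sum_delta_r (f : 'I_n -> R) j : \sum_l f l * (l == j)%:R = f j.
Proof.
rewrite (bigD1 j) //= big1 => [|k /negbTE kj]; first by rewrite eqxx mulr1 addr0.
by rewrite kj mulr0.
Qed.

Lemma cost_delta (s2 : 'I_n -> R) b : \sum_j ((b == j)%:R : R) ^+ 2 * s2 j = s2 b.
Proof.
rewrite -[RHS](sum_delta s2 b); apply: eq_bigr => j _.
by case: (b == j); rewrite ?expr1n ?expr0n.
Qed.

Lemma deviate_self z i a : deviate z i a i = a.
Proof. by rewrite /deviate eqxx. Qed.

Lemma deviate_other z i a k : k != i -> deviate z i a k = z k.
Proof. by rewrite /deviate => /negbTE ->. Qed.

Lemma profile_dev z i a : profile z -> in01 a -> profile (deviate z i a).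
Proof. by move=> Hz Ha k; rewrite /deviate; case: (k == i). Qed.

Lemma aux_lin (a X Y : R) : a != 1 -> (1 - a) * X + a * Y = Y -> X = Y.
Proof.
move=> a1 e.
have h : (1 - a) * (X - Y) = (1 - a) * X + a * Y - Y by ring.
move: h; rewrite e subrr => /eqP; rewrite mulf_eq0 subr_eq0 eq_sym (negbTE a1) /=.
by rewrite subr_eq0 => /eqP.
Qed.

Section Main.
Variables (P : 'M[R]_n) (s2 : 'I_n -> R) (z : 'I_n -> R).
Hypotheses (HP : row_stochastic P) (Hirr : irreducible P) (Hz : profile z).
Hypothesis Hs2 : forall i, 0 < s2 i.

Lemma cost_stub i : z i = 1 -> cost P s2 z i = s2 i.
Proof.
move=> zi; rewrite /cost; under eq_bigr do rewrite H_stub //.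
exact: cost_delta.
Qed.

Lemma H_le1 s0 (Hs0 : z s0 = 1) i j : Hmat P z i j <= 1.
Proof.
rewrite -(H_row _ _ HP Hirr Hz _ Hs0 i) (bigD1 j) //= lerDl sumr_ge0 // => k _.
exact: (H_ge0 _ _ HP Hirr Hz _ Hs0).
Qed.

Lemma caseA s0 (Hs0 : z s0 = 1) i :
  (forall j, z j = 1 -> s2 j <= s2 i) -> cost P s2 z i <= s2 i.
Proof.
move=> Hmin; rewrite /cost.
apply: (@le_trans _ _ (\sum_j Hmat P z i j * s2 i)).
  apply: ler_sum => j _.
  have h0 := H_ge0 _ _ HP Hirr Hz _ Hs0 i j; have h1 := H_le1 _ Hs0 i j.
  case: (eqVneq (z j) 1) => zj.
    have s2j := Hmin j zj.
    apply: (@le_trans _ _ (Hmat P z i j * s2 j)).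
      by apply: ler_wpM2r; [exact: ltW | rewrite expr2 ler_piMr].
    exact: ler_wpM2l.
  by rewrite (H_zero _ _ HP Hirr Hz _ Hs0 i j zj) expr0n /= !mul0r.
by rewrite -mulr_suml (H_row _ _ HP Hirr Hz _ Hs0) mul1r.
Qed.

Lemma caseB i b a : z i = 1 -> b != i -> z b = 1 ->
  (forall j, z j = 1 -> j = i \/ j = b) -> in01 a -> a != 1 ->
  cost P s2 (deviate z i a) i = s2 b.
Proof.
move=> zi bi zb Hoth Ha a1.
set z' := deviate z i a.
have Hz' : profile z' := profile_dev z i a Hz Ha.
have zb' : z' b = 1 by rewrite /z' deviate_other.
have zj' : forall j, j != b -> z' j != 1.
  move=> j jb; case: (eqVneq j i) => [->|ji]; first by rewrite /z' deviate_self.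
  rewrite /z' deviate_other //; apply/eqP => zj.
  by case: (Hoth j zj) => /eqP; rewrite ?(negbTE ji) ?(negbTE jb).
have H0 : forall j, j != b -> Hmat P z' i j = 0.
  by move=> j jb; exact: (H_zero _ _ HP Hirr Hz' _ zb' i j (zj' j jb)).
have H1 : Hmat P z' i b = 1.
  have := H_row _ _ HP Hirr Hz' _ zb' i; rewrite (bigD1 b) //= big1 ?addr0 //.
rewrite /cost (bigD1 b) //= big1 ?addr0 ?H1 ?expr1n ?mul1r // => j jb.
by rewrite H0 // expr2 !mul0r.
Qed.

Lemma caseC i a : z i != 1 -> (exists s0, z s0 = 1) -> in01 a -> a != 1 ->
  cost P s2 (deviate z i a) i = cost P s2 z i.
Proof.
move=> zi [s0 Hs0] Ha a1.
set z' := deviate z i a.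
have Hz' : profile z' := profile_dev z i a Hz Ha.
have s0i : s0 != i by apply/eqP => e; move: zi; rewrite -e Hs0 eqxx.
have Hs0' : z' s0 = 1 by rewrite /z' deviate_other.
set H' := Hmat P z'.
set H := Hmat P z.
have WH' : Wmat P z *m H' = H'.
  apply/matrixP => k j; have := H_harm _ _ HP Hirr Hz' _ Hs0' k j.
  rewrite !WM_entry; case: (eqVneq k i) => [->|ki]; last by rewrite /z' deviate_other.
  rewrite /z' deviate_self -/H' => e.
  by rewrite (aux_lin _ _ _ a1 e) -mulrDl subrK mul1r.
have WtH' : forall t, mxpow (Wmat P z) t *m H' = H'.
  elim=> [|t IH]; first by rewrite /mxpow /= mul1mx.
  by rewrite mxpowS -mulmxA IH WH'.
have HH' : forall k j, (H *m H') k j = H' k j.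
  move=> k j.
  have h1 : (fun t => (mxpow (Wmat P z) t *m H') k j) @ \oo --> (H *m H') k j.
    rewrite mxE; under eq_fun do rewrite mxE.
    by apply: cvg_sumR => l _; apply: cvgMr_tmp; exact: (H_cvg _ _ HP Hirr Hz _ Hs0 k l).
  have h2 : (fun t => (mxpow (Wmat P z) t *m H') k j) @ \oo --> H' k j.
    under eq_fun do rewrite WtH'.
    exact: cvg_cst.
  exact: (cvg_unique _ h1 h2).
have HH'2 : forall k j, (H *m H') k j = H k j.
  move=> k j; rewrite mxE -[RHS](sum_delta_r (fun l => H k l) j); apply: eq_bigr => l _.
  case: (eqVneq (z l) 1) => zl.
    have li : l != i by apply/eqP => e; move: zi; rewrite -e zl eqxx.
    have zl' : z' l = 1 by rewrite /z' deviate_other.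
    have -> : H' l j = (l == j)%:R := H_stub P z' l j zl'.
    by [].
  have -> : H k l = 0 := H_zero P z HP Hirr Hz s0 Hs0 k l zl.
  by rewrite !mul0r.
rewrite /cost; apply: eq_bigr => j _.
have e := HH' i j; rewrite HH'2 in e.
by rewrite /H' /H in e; rewrite e.
Qed.

End Main.

End Aux.

Theorem proposition6 (R : realType) (n : nat) (P : 'M[R]_n) (s2 : 'I_n -> R)
  (z : 'I_n -> R) :
  (2 <= n)%N ->
  row_stochastic P -> irreducible P -> aperiodic P ->
  (forall i, 0 < s2 i) ->
  profile z ->
  #|stubborn z| = 2%N ->
  (forall j i, j \in stubborn z -> s2 j <= s2 i) ->
  nash P s2 z /\ ~ strict_nash P s2 z.
Proof.
move=> n2 HP Hirr Haper Hs2 Hz Hcard Hmin.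
have Hmin' : forall j i, z j = 1 -> s2 j <= s2 i.
  by move=> j i zj; apply: Hmin; rewrite inE zj eqxx.
have /cards2P [x [y [xy Hxy]]] : #|stubborn z| == 2%N by rewrite Hcard.
have memS : forall j, (z j == 1) = (j == x) || (j == y).
  move=> j; have : (j \in stubborn z) = (j \in [set x; y]%SET) by rewrite Hxy.
  by rewrite !inE.
have zx : z x = 1 by apply/eqP; rewrite memS eqxx.
have zy : z y = 1 by apply/eqP; rewrite memS eqxx orbT.
have other : forall i, z i = 1 ->
    exists b, [/\ b != i, z b = 1 & forall j, z j = 1 -> j = i \/ j = b].
  move=> i zi; have := memS i; rewrite zi eqxx => /esym /orP [/eqP ->|/eqP ->].
  - exists y; split => //; first by rewrite eq_sym.
    by move=> j /eqP; rewrite memS => /orP[/eqP->|/eqP->]; [left|right].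
  - exists x; split => //.
    by move=> j /eqP; rewrite memS => /orP[/eqP->|/eqP->]; [right|left].
split.
- split => // i a Ha.
  case: (eqVneq a 1) => [->|a1].
    rewrite (cost_stub _ _ P s2 (deviate z i 1) i (deviate_self _ _ z i 1)).
    exact: (caseA _ _ P s2 z HP Hirr Hz Hs2 x zx i (fun j zj => Hmin' j i zj)).
  case: (eqVneq (z i) 1) => zi.
    have [b [bi zb Hoth]] := other i zi.
    rewrite (caseB _ _ P s2 z HP Hirr Hz i b a zi bi zb Hoth Ha a1) (cost_stub _ _ P s2 z i zi).
    exact: Hmin' i b zi.
  by rewrite (caseC _ _ P s2 z HP Hirr Hz i a zi (ex_intro _ x zx) Ha a1).
- move=> [_ Hs].
  have [b [bx zb Hoth]] := other x zx.
  have H01 : in01 (0:R) by split; [exact: lexx | exact: ler01].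
  have a1 : (0:R) != 1 by rewrite eq_sym oner_eq0.
  have := Hs x 0 H01; rewrite zx => /(_ a1).
  rewrite (caseB _ _ P s2 z HP Hirr Hz x b 0 zx bx zb Hoth H01 a1) (cost_stub _ _ P s2 z x zx) => lt.
  by have := Hmin' b x zb; rewrite leNgt lt.
Qed.
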